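(* Let $n\ge 2$ be even and let $\pi=(\pi_1,\ldots,\pi_n)$ be a permutation of $\{1,\ldots,n\}$. Let $\Delta(\pi)=\sum_{i=1}^{n-1}|\pi_{i+1}-\pi_i|$ and $\Delta^*_n=\max\{\Delta(\sigma):\sigma \text{ a permutation of }\{1,\ldots,n\}\}$. Then $\Delta(\pi)=\Delta^*_n$ if and only if $\pi$ is mid-alternating and $\{\pi_1,\pi_n\}=\{\frac n2,\frac n2+1\}$. Moreover, $\Delta^*_n=(n^2-2)/2$.
   Context: For $n=2k$ even, a permutation $\pi$ of $\{1,\ldots,n\}$ is mid-alternating if for every $i<n$ either ($\pi_i\le k$ and $\pi_{i+1}\ge k+1$) or ($\pi_i\ge k+1$ and $\pi_{i+1}\le k$). *)

(* Defs.v *)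
From mathcomp Require Import all_boot fingroup perm.
Set Implicit Arguments. Unset Strict Implicit. Unset Printing Implicit Defensive.

(* A permutation pi of {1..n} is represented as s : {perm 'I_n};
   position i (1-based i+1) holds the value pi_(i+1) = val (s i) + 1. *)
Definition pival n (s : {perm 'I_n}) (i : nat) : nat :=
  match @insub nat (fun m => m < n) _ i with Some j => (val (s j)).+1 | None => 0 end.

Definition distn (a b : nat) : nat := (a - b) + (b - a).

Definition Delta n (s : {perm 'I_n}) : nat :=
  \sum_(0 <= i < n.-1) distn (pival s i.+1) (pival s i).

Definition Deltastar n : nat := \max_(s : {perm 'I_n}) Delta s.

Definition mid_alternating k (s : {perm 'I_(k.*2)}) : Prop :=
  forall i, i.+1 < k.*2 ->
    (pival s i <= k /\ k.+1 <= pival s i.+1) \/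
    (k.+1 <= pival s i /\ pival s i.+1 <= k).

(* Main.v *)
Require Import Defs.
From mathcomp Require Import all_boot perm zify.
Set Implicit Arguments. Unset Strict Implicit.
Unset Implicit Arguments.

Lemma sum_le_eq (f g : nat -> nat) N :
  (forall t, t < N -> f t <= g t) ->
  \sum_(0 <= t < N) f t = \sum_(0 <= t < N) g t -> forall t, t < N -> f t = g t.
Proof.
elim: N => [|N IH] H E t Ht; first by [].
rewrite !big_nat_recr //= in E.
have H1 : \sum_(0 <= t < N) f t <= \sum_(0 <= t < N) g t.
  rewrite big_nat_cond [X in _ <= X]big_nat_cond; apply: leq_sum => i /andP[/andP[_ Hi] _]; apply: H; lia.
have H2 := H N (ltnSn N).
have [E1 E2] : \sum_(0 <= t < N) f t = \sum_(0 <= t < N) g t /\ f N = g N by lia.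
rewrite ltnS leq_eqVlt in Ht; case/orP: Ht => [/eqP -> //|Ht].
apply: IH => //; move=> i Hi; apply: H; lia.
Qed.

Lemma distn_thr a b N :
  \sum_(0 <= t < N) ((a <= t) != (b <= t)) = distn (minn a N) (minn b N).
Proof.
rewrite /distn; elim: N => [|N IH]; first by rewrite big_nil; lia.
rewrite big_nat_recr //= IH.
case: (leqP a N) => Ha; case: (leqP b N) => Hb /=; lia.
Qed.

Lemma sum_ones m (b : nat -> bool) :
  \sum_(0 <= i < m) (b i : nat) <= m.
Proof.
elim: m => [|m IH]; first by rewrite big_nil.
rewrite big_nat_recr //=; case: (b m) => /=; lia.
Qed.

Lemma sum_ones_eq m (b : nat -> bool) :
  \sum_(0 <= i < m) (b i : nat) = m -> forall i, i < m -> b i.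
Proof.
move=> E i Hi.
have H1 : forall t, t < m -> (b t : nat) <= (fun _ => 1) t by move=> t _; case: (b t).
have E' : \sum_(0 <= t < m) (b t : nat) = \sum_(0 <= t < m) (fun _ => 1) t.
  by rewrite sum_nat_const_nat subn0 muln1.
have := @sum_le_eq (fun i => b i : nat) (fun _ => 1) m H1 E' i Hi.
by case: (b i).
Qed.
Set Implicit Arguments. Unset Strict Implicit.
Unset Implicit Arguments.

Lemma bident m (b : nat -> bool) :
  \sum_(0 <= i < m) ((b i : nat) + b i.+1) + b 0 + b m = (\sum_(0 <= i < m.+1) (b i : nat)).*2.
Proof.
rewrite big_split /= -addnn.
have E1 := @big_nat_recl nat 0 addn m 0 (fun i => (b i : nat)) (leq0n m).
have E2 := @big_nat_recr nat 0 addn m 0 (fun i => (b i : nat)) (leq0n m).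
rewrite {1}E1 E2 /=; lia.
Qed.

Lemma bA m (b : nat -> bool) :
  \sum_(0 <= i < m) (b i != b i.+1 : nat) + b 0 + b m <= (\sum_(0 <= i < m.+1) (b i : nat)).*2.
Proof.
rewrite -bident leq_add2r leq_add2r; apply: leq_sum => i _.
by case: (b i); case: (b i.+1).
Qed.

Lemma bA' m (b : nat -> bool) :
  (forall i, i < m -> ~~ (b i && b i.+1)) ->
  \sum_(0 <= i < m) (b i != b i.+1 : nat) + b 0 + b m = (\sum_(0 <= i < m.+1) (b i : nat)).*2.
Proof.
move=> H; rewrite -bident; congr (_ + _ + _).
apply: eq_big_nat => i /andP[_ Hi]; move: (H i Hi).
by case: (b i); case: (b i.+1).
Qed.

Lemma bneg m (b : nat -> bool) :
  \sum_(0 <= i < m) (~~ b i != ~~ b i.+1 : nat) = \sum_(0 <= i < m) (b i != b i.+1 : nat).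
Proof. by apply: eq_bigr => i _; case: (b i); case: (b i.+1). Qed.

Lemma bcompl n (b : nat -> bool) :
  \sum_(0 <= i < n) (~~ b i : nat) + \sum_(0 <= i < n) (b i : nat) = n.
Proof.
rewrite -big_split /=.
rewrite (eq_bigr (fun _ => 1)); last by move=> i _; case: (b i).
by rewrite sum_nat_const_nat subn0 muln1.
Qed.

Lemma sum_lt n t : \sum_(0 <= i < n) (i < t : nat) = minn t n.
Proof.
elim: n => [|n IH]; first by rewrite big_nil; lia.
rewrite big_nat_recr //= IH; case: (ltnP n t) => /= H; lia.
Qed.

Lemma gsum k : \sum_(0 <= t < k.*2) minn t (k.*2 - t) = k ^ 2.
Proof.
elim: k => [|k IH]; first by rewrite big_nil.
have -> : k.+1.*2 = (k.*2).+1.+1 by lia.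
rewrite big_nat_recl //.
rewrite (eq_big_nat _ _ (F2 := fun t => minn t (k.*2 - t) + 1)); last first.
  move=> i /andP[_ Hi]; lia.
rewrite big_split /= sum_nat_const_nat big_nat_recr //= IH; lia.
Qed.
Set Implicit Arguments. Unset Strict Implicit.

Lemma pivalE n (s : {perm 'I_n}) (i : 'I_n) : pival s i = (s i).+1.
Proof. by rewrite /pival valK. Qed.

Lemma pival_le n (s : {perm 'I_n}) i : pival s i <= n.
Proof.
rewrite /pival; case: insubP => [j _ _|_] //=; exact: ltn_ord.
Qed.

Lemma pival_gt n (s : {perm 'I_n}) i : i < n -> 0 < pival s i.
Proof. by move=> Hi; rewrite (pivalE s (Ordinal Hi)). Qed.

Lemma pival_inj n (s : {perm 'I_n}) i j : i < n -> j < n -> pival s i = pival s j -> i = j.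
Proof.
move=> Hi Hj; rewrite (pivalE s (Ordinal Hi)) (pivalE s (Ordinal Hj)) => [[]] /val_inj/perm_inj.
by move=> [].
Qed.

Lemma count_low n (s : {perm 'I_n}) t : t <= n ->
  \sum_(0 <= i < n) (pival s i <= t : nat) = t.
Proof.
move=> Ht; rewrite big_mkord.
rewrite (eq_bigr (fun i : 'I_n => (s i < t : nat))); last by move=> i _; rewrite pivalE.
rewrite -(reindex_inj (h := s) (F := fun i : 'I_n => (i < t : nat)) (P := xpredT)); last exact: perm_inj.
rewrite -(big_mkord xpredT (fun i => (i < t : nat))) sum_lt; lia.
Qed.

Definition cc n (s : {perm 'I_n}) t :=
  \sum_(0 <= i < n.-1) ((pival s i <= t) != (pival s i.+1 <= t) : nat).

Lemma Delta_c n (s : {perm 'I_n}) : Delta s = \sum_(0 <= t < n) cc s t.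
Proof.
rewrite /Delta /cc.
rewrite (eq_big_nat _ _ (F2 := fun i => \sum_(0 <= t < n) ((pival s i <= t) != (pival s i.+1 <= t) : nat))).
  by rewrite exchange_big_nat.
move=> i _; rewrite distn_thr.
have -> : minn (pival s i.+1) n = pival s i.+1 by have := pival_le s i.+1; lia.
have -> : minn (pival s i) n = pival s i by have := pival_le s i; lia.
rewrite /distn; lia.
Qed.
Set Implicit Arguments. Unset Strict Implicit.

Lemma bound_low n (s : {perm 'I_n}) t : 0 < n -> t <= n ->
  cc s t + (pival s 0 <= t) + (pival s n.-1 <= t) <= t.*2.
Proof.
move=> Hn Ht; have := bA n.-1 (fun i => pival s i <= t).
by rewrite prednK // count_low.
Qed.

Lemma bound_high n (s : {perm 'I_n}) t : 0 < n -> t <= n ->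
  cc s t + ~~(pival s 0 <= t) + ~~(pival s n.-1 <= t) <= (n - t).*2.
Proof.
move=> Hn Ht; have := bA n.-1 (fun i => ~~ (pival s i <= t)).
rewrite bneg prednK //.
have := bcompl n (fun i => pival s i <= t); rewrite count_low // => E.
rewrite /cc; lia.
Qed.

Lemma eq_low n (s : {perm 'I_n}) t : 0 < n -> t <= n ->
  (forall i, i < n.-1 -> ~~ ((pival s i <= t) && (pival s i.+1 <= t))) ->
  cc s t + (pival s 0 <= t) + (pival s n.-1 <= t) = t.*2.
Proof.
move=> Hn Ht H; have := bA' n.-1 (fun i => pival s i <= t) H.
by rewrite prednK // count_low.
Qed.

Lemma eq_high n (s : {perm 'I_n}) t : 0 < n -> t <= n ->
  (forall i, i < n.-1 -> ~~ (~~(pival s i <= t) && ~~(pival s i.+1 <= t))) ->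
  cc s t + ~~(pival s 0 <= t) + ~~(pival s n.-1 <= t) = (n - t).*2.
Proof.
move=> Hn Ht H; have := bA' n.-1 (fun i => ~~ (pival s i <= t)) H.
rewrite bneg prednK //.
have := bcompl n (fun i => pival s i <= t); rewrite count_low // => E.
rewrite /cc; lia.
Qed.

Lemma bound_all n (s : {perm 'I_n}) t : cc s t <= n.-1.
Proof. exact: sum_ones. Qed.

Lemma bound_main k (s : {perm 'I_(k.*2)}) t : 0 < k -> t < k.*2 ->
  cc s t + (t == k) <= (minn t (k.*2 - t)).*2.
Proof.
move=> Hk Ht; have Hn : 0 < k.*2 by lia.
case: (ltngtP t k) => H.
- have := bound_low s Hn (ltnW Ht); lia.
- have := bound_high s Hn (ltnW Ht); lia.
- have := bound_all s t; lia.
Qed.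

Lemma sum_eqk n k : k < n -> \sum_(0 <= t < n) (t == k : nat) = 1.
Proof.
move=> H.
have E : \sum_(0 <= t < n) (t < k.+1 : nat) = \sum_(0 <= t < n) (t < k : nat) + \sum_(0 <= t < n) (t == k : nat).
  rewrite -big_split /=; apply: eq_bigr => t _; rewrite ltnS leq_eqVlt.
  by case: (ltngtP t k).
move: E; rewrite !sum_lt; lia.
Qed.

Lemma sum_main k (s : {perm 'I_(k.*2)}) : 0 < k ->
  \sum_(0 <= t < k.*2) (cc s t + (t == k)) = Delta s + 1.
Proof.
move=> Hk; rewrite big_split /= sum_eqk -?Delta_c //; lia.
Qed.

Lemma gsum2 k : \sum_(0 <= t < k.*2) (minn t (k.*2 - t)).*2 = (k ^ 2).*2.
Proof.
rewrite -gsum -[RHS]addnn -big_split /=; apply: eq_bigr => t _; by rewrite addnn.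
Qed.

Lemma Delta_le k (s : {perm 'I_(k.*2)}) : 0 < k -> Delta s + 1 <= (k ^ 2).*2.
Proof.
move=> Hk; rewrite -sum_main // -gsum2 big_nat_cond [X in _ <= X]big_nat_cond.
apply: leq_sum => t /andP[/andP[_ Ht] _]; exact: bound_main.
Qed.

Lemma Delta_eq_iff k (s : {perm 'I_(k.*2)}) : 0 < k ->
  (Delta s + 1 = (k ^ 2).*2 <->
   forall t, t < k.*2 -> cc s t + (t == k) = (minn t (k.*2 - t)).*2).
Proof.
move=> Hk; rewrite -sum_main // -gsum2; split.
- apply: sum_le_eq => t Ht; exact: bound_main.
- move=> H; apply: eq_big_nat => t /andP[_ Ht]; exact: H.
Qed.

Lemma cond_to_eq k (s : {perm 'I_(k.*2)}) : 0 < k ->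
  mid_alternating s ->
  ((pival s 0 = k /\ pival s (k.*2).-1 = k.+1) \/
   (pival s 0 = k.+1 /\ pival s (k.*2).-1 = k)) ->
  forall t, t < k.*2 -> cc s t + (t == k) = (minn t (k.*2 - t)).*2.
Proof.
move=> Hk Hm He t Ht; have Hn : 0 < k.*2 by lia.
have E0 : k <= pival s 0 <= k.+1 by lia.
have E1 : k <= pival s (k.*2).-1 <= k.+1 by lia.
case: (ltngtP t k) => H.
- have Hna : forall i, i < (k.*2).-1 -> ~~ ((pival s i <= t) && (pival s i.+1 <= t)).
    move=> i Hi; have := Hm i ltac:(lia).
    case: (leqP (pival s i) t); case: (leqP (pival s i.+1) t) => //= *; lia.
  have := @eq_low _ s t Hn (ltnW Ht) Hna.
  have -> : (pival s 0 <= t) = false by apply/negbTE; rewrite -ltnNge; lia.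
  have -> : (pival s (k.*2).-1 <= t) = false by apply/negbTE; rewrite -ltnNge; lia.
  move=> /=; lia.
- have Hna : forall i, i < (k.*2).-1 -> ~~ (~~(pival s i <= t) && ~~(pival s i.+1 <= t)).
    move=> i Hi; have := Hm i ltac:(lia).
    case: (leqP (pival s i) t); case: (leqP (pival s i.+1) t) => //= *; lia.
  have := @eq_high _ s t Hn (ltnW Ht) Hna.
  have -> : (pival s 0 <= t) = true by lia.
  have -> : (pival s (k.*2).-1 <= t) = true by lia.
  move=> /=; lia.
- rewrite H /=.
  have -> : cc s k = (k.*2).-1.
    rewrite /cc (eq_big_nat _ _ (F2 := fun _ => 1)); first by rewrite sum_nat_const_nat; lia.
    move=> i /andP[_ Hi]; have := Hm i ltac:(lia).
    case: (leqP (pival s i) k); case: (leqP (pival s i.+1) k) => //= *; lia.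
  lia.
Qed.

Lemma eq_to_cond k (s : {perm 'I_(k.*2)}) : 0 < k ->
  (forall t, t < k.*2 -> cc s t + (t == k) = (minn t (k.*2 - t)).*2) ->
  mid_alternating s /\
  ((pival s 0 = k /\ pival s (k.*2).-1 = k.+1) \/
   (pival s 0 = k.+1 /\ pival s (k.*2).-1 = k)).
Proof.
move=> Hk H; have Hn : 0 < k.*2 by lia.
split.
- have Hc : cc s k = (k.*2).-1 by have := H k ltac:(lia); rewrite eqxx; lia.
  move=> i Hi; have := @sum_ones_eq (k.*2).-1 (fun i => (pival s i <= k) != (pival s i.+1 <= k)) Hc i ltac:(lia).
  case: (leqP (pival s i) k); case: (leqP (pival s i.+1) k) => //= *; lia.
- have L0 := pival_le s 0; have L1 := pival_le s (k.*2).-1.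
  have G0 := pival_gt s (i := 0) ltac:(lia).
  have G1 := pival_gt s (i := (k.*2).-1) ltac:(lia).
  have Lo : k <= pival s 0 /\ k <= pival s (k.*2).-1.
    case: (ltnP 1 k) => Hk1; last by lia.
    have := H k.-1 ltac:(lia); have := bound_low s (t := k.-1) Hn ltac:(lia).
    case: (leqP (pival s 0) k.-1); case: (leqP (pival s (k.*2).-1) k.-1) => /= *; lia.
  have Hi : pival s 0 <= k.+1 /\ pival s (k.*2).-1 <= k.+1.
    case: (ltnP 1 k) => Hk1; last by lia.
    have := H k.+1 ltac:(lia); have := bound_high s (t := k.+1) Hn ltac:(lia).
    case: (leqP (pival s 0) k.+1); case: (leqP (pival s (k.*2).-1) k.+1) => /= *; lia.
  have Nd : pival s 0 <> pival s (k.*2).-1.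
    move=> /pival_inj; move=> /(_ ltac:(lia) ltac:(lia)); lia.
  lia.
Qed.
Set Implicit Arguments. Unset Strict Implicit.

Definition wv k i := if odd i then (k.*2).-1 - i./2 else k.-1 - i./2.

Lemma wv_lt k i : 0 < k -> wv k i < k.*2.
Proof. rewrite /wv; case: (odd i) => /=; lia. Qed.

Definition wf k (hk : 0 < k) (i : 'I_(k.*2)) : 'I_(k.*2) := Ordinal (wv_lt i hk).

Lemma wf_inj k (hk : 0 < k) : injective (wf hk).
Proof.
move=> [i Hi] [j Hj] /(congr1 val) /=; rewrite /wv => E; apply: val_inj => /=.
have Ei := odd_double_half i; have Ej := odd_double_half j.
move: E Ei Ej; case: (odd i); case: (odd j) => /=; lia.
Qed.

Definition wit k (hk : 0 < k) : {perm 'I_(k.*2)} := perm (@wf_inj k hk).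

Lemma pival_wit k (hk : 0 < k) i : i < k.*2 -> pival (wit hk) i = (wv k i).+1.
Proof. move=> Hi; by rewrite (pivalE (wit hk) (Ordinal Hi)) permE. Qed.

Lemma wit_mid k (hk : 0 < k) : mid_alternating (wit hk).
Proof.
move=> i Hi; rewrite !pival_wit; try lia.
rewrite /wv /=.
have Ei := odd_double_half i; have Ej := odd_double_half i.+1.
move: Ej; rewrite /= => Ej.
move: Ei Ej; case: (odd i) => /=; lia.
Qed.

Lemma wit_end k (hk : 0 < k) :
  pival (wit hk) 0 = k /\ pival (wit hk) (k.*2).-1 = k.+1.
Proof.
rewrite !pival_wit; try lia; rewrite /wv /=; split; first lia.
have Ei := odd_double_half (k.*2).-1.
move: Ei; case: (odd (k.*2).-1) => /=; lia.
Qed.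
Set Implicit Arguments. Unset Strict Implicit.
Unset Implicit Arguments. Set Strict Implicit.

Theorem theorem3p3 (k : nat) (hk : 0 < k) (s : {perm 'I_(k.*2)}) :
  (Delta s = Deltastar (k.*2) <->
     (mid_alternating s /\
      ((pival s 0 = k /\ pival s (k.*2).-1 = k.+1) \/
       (pival s 0 = k.+1 /\ pival s (k.*2).-1 = k)))) /\
  Deltastar (k.*2) = ((k.*2) ^ 2 - 2) %/ 2.
Proof.
have Hw : Delta (wit hk) + 1 = (k ^ 2).*2.
  apply/(Delta_eq_iff _ hk); apply: cond_to_eq => //; first exact: wit_mid.
  left; exact: wit_end.
have HD : Deltastar (k.*2) = (k ^ 2).*2 - 1.
  apply/eqP; rewrite eqn_leq; apply/andP; split.
  - apply/bigmax_leqP => s' _; have := Delta_le s' hk; lia.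
  - rewrite /Deltastar; apply: leq_trans (leq_bigmax (wit hk)); lia.
split; last first.
  rewrite HD; apply/eqP; rewrite eq_sym; apply/eqP.
  have -> : (k.*2) ^ 2 - 2 = ((k ^ 2).*2 - 1) * 2 by rewrite !expnS expn0; lia.
  by rewrite mulnK.
rewrite HD; split.
- move=> E; apply: eq_to_cond => //; apply/(Delta_eq_iff _ hk).
  have := Delta_le s hk; lia.
- move=> [Hm He]; have := (proj2 (Delta_eq_iff s hk)) (cond_to_eq hk Hm He); lia.
Qed.
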